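(* Suppose the p-values are conditionally super-uniform: for every $t$ with $\theta_t=0$, $\mathbb{P}(p_t\le U\mid\mathcal{F}_{t-1})\le U$ a.s. for every $\mathcal F_{t-1}$-measurable $[0,1]$-valued $U$. Fix $d\in(0,1]$ and let $\mathrm{mem\text{-}FDP}^*(t)=\sum_{j\in\mathcal{H}_0(t)}\frac{\alpha_j}{dR^{\mathrm d}_{j-1}+1}$. Then for every $t\ge1$: if $\mathbb{E}[\mathrm{mem\text{-}FDP}^*(t)]\le\alpha$, then $\mathrm{mem\text{-}FDR}(t)\le\alpha$.
   Context: Let $\alpha\in(0,1)$ be a target level. Hypotheses are indexed by $t=1,2,\dots$; $\theta_t\in\{0,1\}$ is a fixed (non-random) indicator with $\theta_t=0$ iff the $t$-th null hypothesis is true. $p_1,p_2,\dots$ are $[0,1]$-valued random variables (p-values). Testing levels $\alpha_1,\alpha_2,\dots$ are $[0,1]$-valued random variables and the decisions are $\delta_t=\mathbb{1}\{p_t\le\alpha_t\}$. Let $\mathcal{F}_t=\sigma(\delta_1,\dots,\delta_t)$, $\mathcal{F}_0$ trivial; each $\alpha_t$ is required to be $\mathcal{F}_{t-1}$-measurable. $\mathcal{H}_0(t)=\{j\le t:\theta_j=0\}$. For a decay parameter $d\in(0,1]$, $R^{\mathrm d}_t=\sum_{j=1}^t d^{t-j}\delta_j$ with $R^{\mathrm d}_0=0$, and $\mathrm{mem\text{-}FDR}(t)=\mathbb{E}\big[\sum_{j\in\mathcal{H}_0(t)}d^{t-j}\delta_j\big/R^{\mathrm d}_t\big]$ with the convention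 $0/0=0$. *)

(* Defs.v *)
From HB Require Import structures.
From mathcomp Require Import all_boot all_order all_algebra.
From mathcomp Require Import all_classical all_reals all_analysis.
Set Implicit Arguments. Unset Strict Implicit. Unset Printing Implicit Defensive.
Import Order.TTheory GRing.Theory Num.Theory.
Local Open Scope classical_set_scope.
Local Open Scope ring_scope.

Section Defs.
Context {d0 : measure_display} {T : measurableType d0} {R : realType}.

(* Decisions delta_j = 1{p_j <= alpha_j} (as a 0/1 real). Hypotheses are
   indexed by j = 1, 2, ...; index 0 is unused. *)
Definition decision (p alpha : nat -> T -> R) (j : nat) (w : T) : R :=
  ((p j w <= alpha j w)%R)%:R.

(* Generators of F_t = sigma(delta_1, ..., delta_t): the preimages
   {w | delta_j(w) \in B}, 1 <= j <= t, B any set of booleans. *)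
Definition filt_gen (p alpha : nat -> T -> R) (t : nat) : set (set T) :=
  [set A | exists j (B : set bool), (1 <= j <= t)%N /\
     A = (fun w => p j w <= alpha j w) @^-1` B].

(* F_t as a collection of events (F_0 is the trivial sigma-algebra). *)
Definition filt (p alpha : nat -> T -> R) (t : nat) : set (set T) :=
  <<s filt_gen p alpha t >>.

Definition filt_meas (p alpha : nat -> T -> R) (t : nat) (X : T -> R) : Prop :=
  forall B : set R, measurable B -> filt p alpha t (X @^-1` B).

Definition Rdec (dd : R) (p alpha : nat -> T -> R) (t : nat) (w : T) : R :=
  \sum_(1 <= j < t.+1) dd ^+ (t - j) * decision p alpha j w.

(* Numerator: sum_{j in H0(t)} d^(t-j) delta_j ; theta j = false iff the
   j-th null is true. *)
Definition Vdec (dd : R) (theta : nat -> bool) (p alpha : nat -> T -> R)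
  (t : nat) (w : T) : R :=
  \sum_(1 <= j < t.+1 | ~~ theta j) dd ^+ (t - j) * decision p alpha j w.

(* mem-FDP(t); MathComp's x / 0 = 0 realizes the convention 0/0 = 0. *)
Definition memFDP (dd : R) (theta : nat -> bool) (p alpha : nat -> T -> R)
  (t : nat) (w : T) : R :=
  Vdec dd theta p alpha t w / Rdec dd p alpha t w.

Definition memFDPstar (dd : R) (theta : nat -> bool) (p alpha : nat -> T -> R)
  (t : nat) (w : T) : R :=
  \sum_(1 <= j < t.+1 | ~~ theta j)
     alpha j w / (dd * Rdec dd p alpha j.-1 w + 1).

End Defs.

(* Main.v *)
Require Import Defs.
From HB Require Import structures.
From mathcomp Require Import all_boot all_order all_algebra.
From mathcomp Require Import all_classical all_reals all_analysis.
From mathcomp Require Import measurable_realfun zify.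
Import Order.TTheory GRing.Theory Num.Theory.
Local Open Scope classical_set_scope.
Local Open Scope ring_scope.

Section Helpers.
Context {d0 : measure_display} {T : measurableType d0} {R : realType}.
Variables (p alpha : nat -> T -> R).
Hypothesis mp : forall j, measurable_fun setT (p j).
Hypothesis ma : forall j, measurable_fun setT (alpha j).

Definition dl (w : T) : nat -> bool := fun i => p i w <= alpha i w.

Lemma meas_dl j : measurable_fun setT (fun w => dl w j).
Proof. exact: measurable_fun_ler. Qed.

Lemma meas_dec j : measurable_fun setT (decision p alpha j).
Proof.
rewrite (_ : decision p alpha j = fun w => if dl w j then 1 else 0); last first.
  by apply/funext => w; rewrite /decision /dl; case: (p j w <= alpha j w).
by apply: measurable_fun_ifT => //; exact: meas_dl.
Qed.

Definition dep (n : nat) (G : (nat -> bool) -> R) :=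
  forall b b', (forall i, (1 <= i <= n)%N -> b i = b' i) -> G b = G b'.

Definition fixb (b : nat -> bool) (m : nat) (v : bool) : nat -> bool :=
  fun i => if i == m then v else b i.

Lemma dep_fix n G v : dep n.+1 G -> dep n (fun b => G (fixb b n.+1 v)).
Proof.
move=> dG b b' H; apply: dG => i /andP[i1 iS]; rewrite /fixb.
case: eqP => // /eqP ne; apply: H; lia.
Qed.

Lemma fixb_id b m v : b m = v -> fixb b m v = b.
Proof. by move=> E; apply/funext => i; rewrite /fixb; case: eqP => // ->. Qed.

Lemma G_split n (G : (nat -> bool) -> R) (b : nat -> bool) : G b = (b n.+1)%:R * G (fixb b n.+1 true)
  + (1 - (b n.+1)%:R) * G (fixb b n.+1 false).
Proof.
case E: (b n.+1).
  by rewrite (fixb_id _ _ _ E) mul1r subrr mul0r addr0.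
by rewrite (fixb_id _ _ _ E) mul0r add0r subr0 mul1r.
Qed.

Lemma meas_dep n G : dep n G -> measurable_fun setT (fun w => G (dl w)).
Proof.
elim: n G => [|n IH] G dG.
  rewrite (_ : (fun w => G (dl w)) = fun _ => G (fun _ => false)).
    exact: measurable_cst.
  by apply/funext => w; apply: dG => i; lia.
rewrite (_ : (fun w => G (dl w)) = fun w =>
   decision p alpha n.+1 w * G (fixb (dl w) n.+1 true)
  + (1 - decision p alpha n.+1 w) * G (fixb (dl w) n.+1 false)).
  apply: measurable_funD; apply: measurable_funM.
  - exact: meas_dec.
  - exact: (IH _ (@dep_fix n G true dG)).
  - apply: measurable_funB => //; exact: meas_dec.
  - exact: (IH _ (@dep_fix n G false dG)).
by apply/funext => w; rewrite [LHS](G_split n).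
Qed.


Lemma filt_meas_set t A : filt p alpha t A -> measurable A.
Proof.
move=> fA; apply: (smallest_sub (@sigma_algebra_measurable _ T) _ fA).
move=> _ [i [B [_ ->]]].
by have := meas_dl i measurableT B; rewrite setTI; apply.
Qed.

Arguments filt_meas_set {t A}.

Lemma filtI t A B : filt p alpha t A -> filt p alpha t B -> filt p alpha t (A `&` B).
Proof. exact: (@measurableI _ (g_sigma_algebraType (filt_gen p alpha t))). Qed.

Lemma filtC t A : filt p alpha t A -> filt p alpha t (~` A).
Proof. exact: sigma_algebraC. Qed.

Lemma filtT t : filt p alpha t setT.
Proof. by rewrite -setC0; apply: filtC; exact: sigma_algebra0. Qed.


Section Key.
Variables (P : probability T R) (j : nat).
Hypothesis SU : forall A, filt p alpha j.-1 A ->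
  (\int[P]_(w in A) (decision p alpha j w)%:E <= \int[P]_(w in A) (alpha j w)%:E)%E.
Hypothesis a0 : forall w, 0 <= alpha j w.

Lemma dec_ge0 i w : 0 <= decision p alpha i w.
Proof. by rewrite /decision; case: (p i w <= alpha i w). Qed.

Lemma key n (G : (nat -> bool) -> R) A : (n <= j.-1)%N -> dep n G ->
  (forall b, 0 <= G b) -> filt p alpha j.-1 A ->
  (\int[P]_(w in A) (decision p alpha j w * G (dl w))%:E <=
   \int[P]_(w in A) (alpha j w * G (dl w))%:E)%E.
Proof.
elim: n G A => [|n IH] G A nj dG G0 fA; have mA := filt_meas_set fA.
  set c := G (fun _ => false).
  have Gc : forall w, G (dl w) = c by move=> w; apply: dG => i; lia.
  under eq_integral do rewrite Gc mulrC EFinM.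
  under [X in (_ <= X)%E]eq_integral do rewrite Gc mulrC EFinM.
  rewrite !ge0_integralZl_EFin //; last 7 first.
  - apply: lee_wpmul2l; last exact: SU.
    rewrite lee_fin; exact: G0.
  - by move=> x _; rewrite lee_fin.
  - by apply/measurable_EFinP; apply: measurable_funTS.
  - exact: G0.
  - by move=> x _; rewrite lee_fin dec_ge0.
  - by apply/measurable_EFinP; apply: measurable_funTS; exact: meas_dec.
  - exact: G0.
set S := [set w | dl w n.+1].
have fS : filt p alpha j.-1 S.
  by apply: sub_gen_smallest; exists n.+1, [set true]; split => //; lia.
set A1 := A `&` S; set A0 := A `&` ~` S.
have fA1 : filt p alpha j.-1 A1 by apply: filtI.
have fA0 : filt p alpha j.-1 A0 by apply: filtI => //; apply: filtC.
have AE : A = A1 `|` A0 by rewrite /A1 /A0 -setIUr setUv setIT.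
have dis : [disjoint A1 & A0].
  by apply/disj_setPS => w [[_ h] [_ h']]; exact: h' h.
have mG : measurable_fun setT (fun w => G (dl w)) by exact: (meas_dep _ _ dG).
rewrite AE !ge0_integral_setU //.
- apply: leeD.
  + rewrite (eq_integral (fun w => (decision p alpha j w * G (fixb (dl w) n.+1 true))%:E)); last first.
      by move=> w; rewrite inE => -[_ Sw]; rewrite fixb_id.
    rewrite [X in (_ <= X)%E](eq_integral (fun w => (alpha j w * G (fixb (dl w) n.+1 true))%:E)); last first.
      by move=> w; rewrite inE => -[_ Sw]; rewrite fixb_id.
    apply: (IH (fun b => G (fixb b n.+1 true))) => //; first lia.
    exact: dep_fix.
  + rewrite (eq_integral (fun w => (decision p alpha j w * G (fixb (dl w) n.+1 false))%:E)); last first.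
      by move=> w; rewrite inE => -[_ /negP/negbTE Sw]; rewrite fixb_id.
    rewrite [X in (_ <= X)%E](eq_integral (fun w => (alpha j w * G (fixb (dl w) n.+1 false))%:E)); last first.
      by move=> w; rewrite inE => -[_ /negP/negbTE Sw]; rewrite fixb_id.
    apply: (IH (fun b => G (fixb b n.+1 false))) => //; first lia.
    exact: dep_fix.
all: try (apply: filt_meas_set; eassumption).
all: try (by move=> x _; rewrite lee_fin mulr_ge0 ?dec_ge0).
all: apply/measurable_EFinP; apply: measurable_funTS; apply: measurable_funM => //; exact: meas_dec.
Qed.

End Key.

Lemma dep_sum n (P0 : pred nat) (F : nat -> bool -> R) (b b' : nat -> bool) :
  (forall i, (1 <= i <= n)%N -> b i = b' i) ->
  \sum_(1 <= i < n.+1 | P0 i) F i (b i) = \sum_(1 <= i < n.+1 | P0 i) F i (b' i).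
Proof.
move=> H; rewrite big_nat_cond [RHS]big_nat_cond.
apply: eq_bigr => i /andP[/andP[i1 iN] _]; rewrite H //; lia.
Qed.

Section Alg.
Variable dd : R.
Hypothesis dd0 : 0 <= dd.

Lemma Rdec_S m w : Rdec dd p alpha m.+1 w =
  dd * Rdec dd p alpha m w + decision p alpha m.+1 w.
Proof.
rewrite /Rdec big_nat_recr //= subnn expr0 mul1r; congr (_ + _).
rewrite mulr_sumr; apply: eq_big_nat => i /andP[i1 im].
rewrite mulrA -exprS; congr (_ ^+ _ * _); lia.
Qed.

Lemma Rdec_ge0 m w : 0 <= Rdec dd p alpha m w.
Proof.
by apply: sumr_ge0 => i _; apply: mulr_ge0; [exact: exprn_ge0|exact: dec_ge0].
Qed.

Lemma Rmono k m w : dd ^+ k * Rdec dd p alpha m w <= Rdec dd p alpha (m + k) w.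
Proof.
elim: k => [|k IH]; first by rewrite expr0 mul1r addn0.
rewrite addnS Rdec_S exprS -mulrA.
rewrite -[X in X <= _]addr0; apply: lerD; last exact: dec_ge0.
exact: (ler_wpM2l dd0 IH).
Qed.

Lemma bound j t w : (1 <= j <= t)%N -> dl w j ->
  dd ^+ (t - j) * (dd * Rdec dd p alpha j.-1 w + 1) <= Rdec dd p alpha t w.
Proof.
move=> /andP[j1 jt] dj.
have := Rmono (t - j) j w; rewrite subnKC //.
have -> // : Rdec dd p alpha j w = dd * Rdec dd p alpha j.-1 w + 1.
rewrite -{1}(prednK j1) Rdec_S prednK //.
by rewrite /decision; rewrite /dl in dj; rewrite dj.
Qed.

Lemma pointwise theta t w :
  memFDP dd theta p alpha t w <=
  \sum_(1 <= j < t.+1 | ~~ theta j)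
     decision p alpha j w * (dd * Rdec dd p alpha j.-1 w + 1)^-1.
Proof.
have R0 := Rdec_ge0 t w.
have Xp : forall j, 0 < dd * Rdec dd p alpha j.-1 w + 1.
  by move=> j; apply: ltr_wpDl; [exact: mulr_ge0 dd0 (Rdec_ge0 _ _)|exact: ltr01].
rewrite /memFDP /Vdec.
have [->|Rne] := eqVneq (Rdec dd p alpha t w) 0.
  rewrite invr0 mulr0; apply: sumr_ge0 => j _; apply: mulr_ge0; first exact: dec_ge0.
  by rewrite invr_ge0 ltW.
have Rpos : 0 < Rdec dd p alpha t w by rewrite lt_def Rne R0.
rewrite mulr_suml big_nat_cond [X in _ <= X]big_nat_cond.
apply: ler_sum => j /andP[/andP[j1 jt] _].
have := @bound j t w; rewrite /decision /dl.
case: (p j w <= alpha j w) => [|_]; last by rewrite /= !mulr0n mulr0 !mul0r.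
move=> /(_ _ isT) Hb; rewrite /= !mulr1n mulr1 mul1r ler_pdivrMr // mulrC ler_pdivlMr //.
apply: Hb; lia.
Qed.

End Alg.
End Helpers.

Lemma int_sum {d0 : measure_display} {T : measurableType d0} {R : realType}
  (P : probability T R) (theta : nat -> bool) t (F : nat -> T -> R) :
  (forall j, measurable_fun setT (F j)) -> (forall j w, 0 <= F j w) ->
  (\int[P]_w (\sum_(1 <= j < t.+1 | ~~ theta j) F j w)%:E =
   \sum_(1 <= j < t.+1 | ~~ theta j) \int[P]_w (F j w)%:E)%E.
Proof.
move=> mF F0.
under eq_integral do rewrite -sumEFin -big_filter.
rewrite ge0_integral_sum //; first by rewrite big_filter.
- by move=> j; apply/measurable_EFinP; exact: mF.
- by move=> j x _; rewrite lee_fin.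
Qed.


Theorem theorem4 (d0 : measure_display) (T : measurableType d0) (R : realType)
  (P : probability T R) (alpha_level dd : R)
  (theta : nat -> bool) (p alpha : nat -> T -> R) :
  0 < alpha_level < 1 ->
  0 < dd <= 1 ->
  (* p-values and testing levels are [0,1]-valued random variables *)
  (forall j, measurable_fun setT (p j)) ->
  (forall j, measurable_fun setT (alpha j)) ->
  (forall j w, 0 <= p j w <= 1) ->
  (forall j w, 0 <= alpha j w <= 1) ->
  (* alpha_t is F_{t-1}-measurable *)
  (forall t, (1 <= t)%N -> filt_meas p alpha t.-1 (alpha t)) ->
  (* conditional super-uniformity: P(p_t <= U | F_{t-1}) <= U a.s., stated via
     the defining property of conditional expectation on every A in F_{t-1} *)
  (forall t, (1 <= t)%N -> theta t = false ->
     forall U : T -> R, filt_meas p alpha t.-1 U ->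
     (forall w, 0 <= U w <= 1) ->
     forall A, filt p alpha t.-1 A ->
     (\int[P]_(w in A) (((p t w <= U w)%R)%:R : R)%:E <= \int[P]_(w in A) (U w)%:E)%E) ->
  forall t, (1 <= t)%N ->
  (\int[P]_w (memFDPstar dd theta p alpha t w)%:E <= alpha_level%:E)%E ->
  (\int[P]_w (memFDP dd theta p alpha t w)%:E <= alpha_level%:E)%E.
Proof.
move=> _ /andP[dpos _] mp ma p01 a01 afm SU t t1 Hstar.
have dd0 : 0 <= dd := ltW dpos.
apply: le_trans Hstar.
pose GW j (b : nat -> bool) : R :=
  (dd * \sum_(1 <= i < j.-1.+1) dd ^+ (j.-1 - i) * (b i)%:R + 1)^-1.
have dGW : forall j, dep j.-1 (GW j).
  move=> j b b' H; rewrite /GW.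
  by rewrite (@dep_sum R _ _ (fun i c => dd ^+ (j.-1 - i) * (c%:R : R)) _ _ H).
have GW0 : forall j b, 0 <= GW j b.
  move=> j b; rewrite /GW invr_ge0 addr_ge0 // mulr_ge0 // sumr_ge0 // => i _.
  by rewrite mulr_ge0 ?exprn_ge0.
have mW : forall j, measurable_fun setT (fun w => GW j (dl p alpha w)).
  by move=> j; exact: (meas_dep _ _ mp ma _ _ (dGW j)).
have H1 : (\int[P]_w (memFDP dd theta p alpha t w)%:E <= \int[P]_w (\sum_(1 <= j < t.+1 | ~~ theta j)
   (decision p alpha j w * GW j (dl p alpha w)))%:E)%E.
  apply: ge0_le_integral => //.
  - move=> w _; rewrite lee_fin /memFDP divr_ge0 ?Rdec_ge0 //.
    by apply: sumr_ge0 => j _; rewrite mulr_ge0 ?exprn_ge0 ?dec_ge0.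
  - pose GM (b : nat -> bool) : R :=
      (\sum_(1 <= j < t.+1 | ~~ theta j) dd ^+ (t - j) * (b j)%:R) /
      (\sum_(1 <= j < t.+1) dd ^+ (t - j) * (b j)%:R).
    have dGM : dep t GM.
      move=> b b' H; rewrite /GM.
      rewrite (@dep_sum R _ _ (fun i c => dd ^+ (t - i) * (c%:R : R)) _ _ H).
      by rewrite (@dep_sum R _ _ (fun i c => dd ^+ (t - i) * (c%:R : R)) _ _ H).
    apply/measurable_EFinP; exact: (meas_dep _ _ mp ma _ _ dGM).
  - apply/measurable_EFinP.
    under eq_fun do rewrite -big_filter.
    apply: measurable_sum => j; apply: measurable_funM; [exact: meas_dec|exact: mW].
  - by move=> w _; rewrite lee_fin; exact: (pointwise _ _ _ dd0).
apply: (le_trans H1).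
rewrite (int_sum P theta t (fun j w => decision p alpha j w * GW j (dl p alpha w))); last 2 first.
- by move=> j; apply: measurable_funM; [exact: meas_dec|exact: mW].
- by move=> j w; rewrite mulr_ge0 ?dec_ge0.
rewrite /memFDPstar (int_sum P theta t (fun j w => alpha j w * GW j (dl p alpha w))); last 2 first.
- by move=> j; apply: measurable_funM; [exact: ma|exact: mW].
- by move=> j w; rewrite mulr_ge0 //; case/andP: (a01 j w).
rewrite big_nat_cond [X in (_ <= X)%E]big_nat_cond.
apply: lee_sum => j /andP[/andP[j1 jt] th].
apply: (key _ _ mp ma P j _ _ j.-1 (GW j) setT) => //.
- move=> A fA; exact: (SU j j1 (negbTE th) (alpha j) (afm j j1) (a01 j) A fA).
- by move=> w; case/andP: (a01 j w).
- exact: filtT.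
Qed.
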